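(* For every ${\bf F}(z)=\sum_{c=1}^sF_c(z)\otimes e_c\in\hat\Lambda^{(s)}\otimes V$ and every $N\in{\mathbb N}$, $$E_N\big((\bar\pi_{N-1}\otimes1){\bf F}(z)\big)=\bar\pi_N\big(\mathcal S({\bf F}(z))\big)$$ as elements of $\Lambda^{s,N}_+$.
   Context: Fix $s\ge1$. Let $\hat\Lambda^{(s)}={\mathbb C}[p_{a,k}: a=1,\dots,s,\ k=0,1,2,\dots]$, $e_1,\dots,e_s$ the standard basis of ${\mathbb C}^s$, $V={\mathbb C}[z]\otimes{\mathbb C}^s$. For $c=1,\dots,s$, $\Phi_c(z)$ is the substitution $p_{c,k}\mapsto p_{c,k}+z^k$ ($k\ge0$) and $\Phi_c^{-1}(z)$ the substitution $p_{c,k}\mapsto p_{c,k}-z^k$ ($k\ge0$), other variables unchanged; $\varphi^-_c(z)=\sum_{k\ge0}p_{c,k}z^{-k}$ (multiplication operator). $\langle0|_+$ is the constant-term functional on $\hat\Lambda^{(s)}$. Define $\bar\pi_N(|v\rangle_+)=\sum_{c_1,\dots,c_N}\langle0|_+\Phi_{c_N}(x_N)\cdots\Phi_{c_1}(x_1)|v\rangle_+\,e_{c_1}\otimes\cdots\otimes e_{c_N}\in{\mathbb C}[x_1,\dots,x_N]\otimes({\mathbb C}^s)^{\otimes N}$ (the $i$-th factor carries $x_i$). $\Lambda^{s,N}_+$ is the space of such tensors invariant under all $\sigma_{ij}=K_{ij}P_{ij}$ ($K_{ij}$ swaps $x_i,x_j$; $P_{ij}$ swaps tensor factors $i,j$).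 $(\bar\pi_{N-1}\otimes1){\bf F}(z)$ denotes $\sum_{c_1,\dots,c_N}\langle0|_+\Phi_{c_N}(x_N)\cdots\Phi_{c_2}(x_2)F_{c_1}(x_1)\,e_{c_1}\otimes\cdots\otimes e_{c_N}$, which is invariant under $\sigma_{ij}$ for $i,j\ge2$. For such a tensor $u$, $E_N(u)=\sum_{j=1}^N\sigma_{1j}(u)$ with $\sigma_{11}=\mathrm{id}$. Finally $\mathcal S({\bf F}(z))\in\hat\Lambda^{(s)}$ is the coefficient of $z^0$ of the Laurent series $\sum_{c=1}^s\varphi^-_c(z)\,\Phi_c^{-1}(z)F_c(z)$ (here $\Phi_c^{-1}(z)$ acts on the $\hat\Lambda^{(s)}$-coefficients of $F_c(z)$). *)

(* Defs.v *)
From HB Require Import structures.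
From mathcomp Require Import all_boot all_order all_algebra.
Set Implicit Arguments. Unset Strict Implicit. Unset Printing Implicit Defensive.
Import GRing.Theory.
Local Open Scope ring_scope.

(* Lambda-hat^(s) with coefficients in A: the polynomial ring                *)
(* A[p_{a,k} : a < s, k >= 0], presented by polynomial expressions.  All     *)
(* maps below are defined on expressions as (evaluations of) ring            *)
(* homomorphisms, hence are well defined on the polynomial ring itself.      *)
Inductive Lam (A : Type) (s : nat) : Type :=
| LC of A
| LP of 'I_s & nat              (* the variable p_{a,k} *)
| LAdd of Lam A s & Lam A s
| LMul of Lam A s & Lam A s.
Arguments LC {A s}. Arguments LP {A s}. Arguments LAdd {A s}. Arguments LMul {A s}.

Section LamOps.
Variables (s : nat).

Fixpoint lmap (R A : Type) (f : R -> A) (e : Lam R s) : Lam A s :=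
  match e with
  | LC r => LC (f r)
  | LP a k => LP a k
  | LAdd e1 e2 => LAdd (lmap f e1) (lmap f e2)
  | LMul e1 e2 => LMul (lmap f e1) (lmap f e2)
  end.

Fixpoint Phi (A : nzRingType) (c : 'I_s) (x : A) (e : Lam A s) : Lam A s :=
  match e with
  | LC r => LC r
  | LP a k => if a == c then LAdd (LP a k) (LC (x ^+ k)) else LP a k
  | LAdd e1 e2 => LAdd (Phi c x e1) (Phi c x e2)
  | LMul e1 e2 => LMul (Phi c x e1) (Phi c x e2)
  end.

(* <0|_+ : constant term (all p_{a,k} set to 0) *)
Fixpoint vac0 (A : nzRingType) (e : Lam A s) : A :=
  match e with
  | LC r => r
  | LP _ _ => 0
  | LAdd e1 e2 => vac0 e1 + vac0 e2
  | LMul e1 e2 => vac0 e1 * vac0 e2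
  end.

Definition lsum (A : nzRingType) (l : seq (Lam A s)) : Lam A s :=
  foldr LAdd (LC 0) l.

(* Lambda-hat[z] = Lambda-hat (x) C[z], as coefficient lists in z *)
Fixpoint padd (A : Type) (p q : seq (Lam A s)) : seq (Lam A s) :=
  match p, q with
  | [::], _ => q
  | _, [::] => p
  | a :: p', b :: q' => LAdd a b :: padd p' q'
  end.

Fixpoint pmul (A : nzRingType) (p q : seq (Lam A s)) : seq (Lam A s) :=
  match p with
  | [::] => [::]
  | a :: p' => padd (map (LMul a) q) (LC 0 :: pmul p' q)
  end.

(* Phi_c^{-1}(z) : Lambda-hat -> Lambda-hat[z], p_{c,k} |-> p_{c,k} - z^k *)
Fixpoint PhiInvZ (A : nzRingType) (c : 'I_s) (e : Lam A s) : seq (Lam A s) :=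
  match e with
  | LC r => [:: LC r]
  | LP a k => if a == c then padd [:: LP a k] (rcons (nseq k (LC 0)) (LC (-1)))
              else [:: LP a k]
  | LAdd e1 e2 => padd (PhiInvZ c e1) (PhiInvZ c e2)
  | LMul e1 e2 => pmul (PhiInvZ c e1) (PhiInvZ c e2)
  end.

End LamOps.

(* C[x_1,...,x_N]: iterated univariate polynomials; x_{i+1} is mvar i.       *)
Fixpoint mpoly (R : comNzRingType) (n : nat) : comNzRingType :=
  match n with
  | 0 => R
  | n'.+1 => ({poly mpoly R n'} : comNzRingType)
  end.

Fixpoint mconst (R : comNzRingType) (n : nat) (r : R) : mpoly R n :=
  match n return mpoly R n with
  | 0 => r
  | n'.+1 => (mconst n' r)%:P
  end.

Fixpoint mvar (R : comNzRingType) (n : nat) (i : nat) : mpoly R n :=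
  match n return mpoly R n with
  | 0 => 0
  | n'.+1 => if i == n' then 'X else (mvar R n' i)%:P
  end.

Fixpoint meval (R A : comNzRingType) (cst : R -> A) (v : nat -> A) (n : nat)
  : mpoly R n -> A :=
  match n return mpoly R n -> A with
  | 0 => cst
  | n'.+1 => fun p : {poly mpoly R n'} => (map_poly (@meval R A cst v n') p).[v n']
  end.

Definition swapn (i j k : nat) : nat := if k == i then j else if k == j then i else k.
Definition swapo (N : nat) (i j k : 'I_N) : 'I_N :=
  if k == i then j else if k == j then i else k.

(* Tensors in C[x_1..x_N] (x) (C^s)^{(x)N}: the coefficient of               *)
(* e_{c_1} (x) ... (x) e_{c_N} for the colouring c : 'I_N -> 'I_s.           *)
Definition tens (R : comNzRingType) (s N : nat) := {ffun 'I_N -> 'I_s} -> mpoly R N.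

(* Phi_{c_{i_m}}(x_{i_m}) ... Phi_{c_{i_1}}(x_{i_1}) applied to e, l = [i_1..i_m] *)
Definition Phis (R : comNzRingType) (s N : nat) (c : {ffun 'I_N -> 'I_s})
    (l : seq 'I_N) (e : Lam (mpoly R N) s) : Lam (mpoly R N) s :=
  foldl (fun acc i => Phi (c i) (mvar R N i) acc) e l.

Definition pibar (R : comNzRingType) (s N : nat) (v : Lam R s) : tens R s N :=
  fun c => vac0 (Phis c (enum 'I_N) (lmap (@mconst R N) v)).

(* Lambda-hat (x) V : F c = list of z-coefficients of F_c(z) *)
Definition LV (R : comNzRingType) (s : nat) := 'I_s -> seq (Lam R s).

Definition evalF (R : comNzRingType) (s N : nat) (F : LV R s) (c : 'I_s)
    (x : mpoly R N) : Lam (mpoly R N) s :=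
  lsum [seq LMul (lmap (@mconst R N) (nth (LC 0) (F c) m)) (LC (x ^+ m))
       | m <- iota 0 (size (F c))].

(* (pibar_{N-1} (x) 1) F(z), with N = n.+1; factor 1 is index ord0 *)
Definition pibar1 (R : comNzRingType) (s n : nat) (F : LV R s) : tens R s n.+1 :=
  fun c => vac0 (Phis c [seq i <- enum 'I_n.+1 | i != ord0 :> 'I_n.+1]
                     (evalF F (c (@ord0 n)) (mvar R n.+1 (@ord0 n)))).

Definition sigma (R : comNzRingType) (s N : nat) (i j : 'I_N) (u : tens R s N)
  : tens R s N :=
  fun c => meval (@mconst R N) (fun k => mvar R N (swapn i j k))
                 (u [ffun k => c (swapo i j k)]).

(* E_N(u) = sum_j sigma_{1j}(u), with sigma_{11} = id *)
Definition EN (R : comNzRingType) (s n : nat) (u : tens R s n.+1) : tens R s n.+1 :=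
  fun c => \sum_(j < n.+1) (if j == @ord0 n then u c else sigma (@ord0 n) j u c).

(* S(F) = [z^0] sum_c phi^-_c(z) Phi_c^{-1}(z) F_c(z); with
   G_c(z) = Phi_c^{-1}(z) F_c(z) = sum_m g_{c,m} z^m, this coefficient is
   sum_c sum_m p_{c,m} g_{c,m}. *)
Definition PhiInvF (R : comNzRingType) (s : nat) (F : LV R s) (c : 'I_s)
  : seq (Lam R s) :=
  foldr (fun f acc => padd (PhiInvZ c f) (LC 0 :: acc)) [::] (F c).

Definition SF (R : comNzRingType) (s : nat) (F : LV R s) : Lam R s :=
  lsum [seq lsum [seq LMul (LP c m) (nth (LC 0) (PhiInvF F c) m)
                 | m <- iota 0 (size (PhiInvF F c))]
       | c <- enum 'I_s].

(* Main.v *)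
Require Import Defs.
From HB Require Import structures.
From mathcomp Require Import all_boot all_order all_algebra.
Set Implicit Arguments. Unset Strict Implicit. Unset Printing Implicit Defensive.
Import GRing.Theory.
Local Open Scope ring_scope.

Section Morph.
Variable R : comNzRingType.

Fixpoint mconstR (n : nat) : {rmorphism R -> mpoly R n} :=
  match n return {rmorphism R -> mpoly R n} with
  | 0 => (idfun : R -> R)
  | n'.+1 => ((polyC : mpoly R n' -> {poly mpoly R n'}) \o mconstR n')%FUN
  end.

Lemma mconstRE n r : mconstR n r = mconst n r.
Proof. by elim: n => //= n ->. Qed.

Fixpoint mevalR (A : comNzRingType) (cst : {rmorphism R -> A}) (v : nat -> A) (n : nat)
  : {rmorphism mpoly R n -> A} :=
  match n return {rmorphism mpoly R n -> A} with
  | 0 => cst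
  | n'.+1 => horner_morph (fun a => mulrC (v n') (mevalR cst v n' a))
  end.

Lemma meval_ext (A : comNzRingType) (f g : R -> A) v n (p : mpoly R n) :
  f =1 g -> meval f v p = meval g v p.
Proof.
move=> fg; elim: n p => [|n IH] p /=; first exact: fg.
by congr (_.[_]); apply: eq_map_poly => q; apply: IH.
Qed.

Lemma mevalRE (A : comNzRingType) (cst : {rmorphism R -> A}) v n (p : mpoly R n) :
  meval cst v p = mevalR cst v n p.
Proof.
elim: n p => [|n IH] p //=.
rewrite /horner_morph; congr (_.[_]); apply: eq_map_poly => q; apply: IH.
Qed.

Lemma meval_mconst (A : comNzRingType) (cst : {rmorphism R -> A}) v n r :
  meval cst v (mconst n r) = cst r.
Proof.
elim: n => [|n IH] //=.
rewrite (eq_map_poly (@mevalRE A cst v n)) map_polyC hornerC -IH mevalRE; reflexivity.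
Qed.

Lemma meval_mvar (A : comNzRingType) (cst : {rmorphism R -> A}) v n (i : nat) :
  (i < n)%N -> meval cst v (mvar R n i) = v i.
Proof.
elim: n => [|n IH] //= lt.
rewrite (eq_map_poly (@mevalRE A cst v n)).
case: eqP => [->|ne].
  by rewrite map_polyX hornerX.
rewrite map_polyC hornerC.
have lt' : (i < n)%N.
  by rewrite ltnS leq_eqVlt in lt; case/orP: lt => // /eqP.
by rewrite -(IH lt') mevalRE.
Qed.
Lemma mevalR_mconst (A : comNzRingType) (cst : {rmorphism R -> A}) v n r :
  mevalR cst v n (mconst n r) = cst r.
Proof. rewrite -(meval_mconst cst v n r) mevalRE; reflexivity. Qed.

Lemma mevalR_mvar (A : comNzRingType) (cst : {rmorphism R -> A}) v n (i : nat) :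
  (i < n)%N -> mevalR cst v n (mvar R n i) = v i.
Proof. move=> lt; rewrite -(meval_mvar cst v lt) mevalRE; reflexivity. Qed.
End Morph.

Section Ev.
Variable s : nat.

Fixpoint ev (R : Type) (A : comNzRingType) (cst : R -> A) (v : 'I_s -> nat -> A)
  (e : Lam R s) : A :=
  match e with
  | LC r => cst r
  | LP a k => v a k
  | LAdd e1 e2 => ev cst v e1 + ev cst v e2
  | LMul e1 e2 => ev cst v e1 * ev cst v e2
  end.

Lemma ev_ext (R : Type) (A : comNzRingType) (f g : R -> A) (v w : 'I_s -> nat -> A) e :
  f =1 g -> (forall a k, v a k = w a k) -> ev f v e = ev g w e.
Proof. by move=> fg vw; elim: e => //= [e1 -> e2 ->|e1 -> e2 ->]. Qed.

Lemma ev_lmap (R B : Type) (A : comNzRingType) (f : R -> B) (cst : B -> A) v e :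
  ev cst v (lmap f e) = ev (cst \o f) v e.
Proof. by elim: e => //= [e1 -> e2 ->|e1 -> e2 ->]. Qed.

Lemma ev_morph (R : Type) (A B : comNzRingType) (phi : {rmorphism A -> B}) (cst : R -> A) v e :
  phi (ev cst v e) = ev (phi \o cst) (fun a k => phi (v a k)) e.
Proof. by elim: e => //= [e1 <- e2 <-|e1 <- e2 <-]; rewrite ?rmorphD ?rmorphM. Qed.

Lemma vac0E (A : comNzRingType) (e : Lam A s) : vac0 e = ev id (fun _ _ => 0) e.
Proof. by elim: e => //= [e1 -> e2 ->|e1 -> e2 ->]. Qed.

Lemma ev_Phi (A : comNzRingType) (c : 'I_s) (x : A) v e :
  ev id v (Phi c x e) = ev id (fun a k => v a k + (a == c)%:R * x ^+ k) e.
Proof.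
elim: e => //= [a k|e1 -> e2 ->|e1 -> e2 ->] //.
by case: eqP => _ /=; rewrite ?mul1r ?mul0r ?addr0.
Qed.

Lemma ev_lsum (R : nzRingType) (A : comNzRingType) (cst : R -> A) v l :
  cst 0 = 0 -> ev cst v (lsum l) = \sum_(e <- l) ev cst v e.
Proof.
move=> c0; elim: l => [|e l IH] /=; first by rewrite big_nil.
by rewrite big_cons IH.
Qed.
End Ev.

Section Pev.
Variables (s : nat) (R : nzRingType) (A : comNzRingType) (cst : {rmorphism R -> A}) (v : 'I_s -> nat -> A).

Definition pev (L : seq (Lam R s)) : {poly A} :=
  foldr (fun e p => (ev cst v e)%:P + p * 'X) 0 L.

Definition T (w : 'I_s -> nat -> A) (L : seq (Lam R s)) (y : A) : A :=
  \sum_(m < size L) ev cst w (nth (LC 0) L m) * y ^+ m.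

Lemma T_cons w f L y : T w (f :: L) y = ev cst w f + T w L y * y.
Proof.
rewrite /T /= big_ord_recl /= expr0 mulr1 big_distrl /=; congr (_ + _).
by apply: eq_bigr => i _; rewrite exprSr mulrA.
Qed.

Lemma T_ext w w' L y : (forall a k, w a k = w' a k) -> T w L y = T w' L y.
Proof. by move=> ww; apply: eq_bigr => i _; congr (_ * _); apply: ev_ext. Qed.

Lemma pev_horner L y : (pev L).[y] = T v L y.
Proof.
elim: L => [|e L IH] /=; first by rewrite horner0 /T big_ord0.
by rewrite T_cons hornerD hornerC hornerMX IH.
Qed.

Lemma pev_padd p q : pev (padd p q) = pev p + pev q.
Proof.
elim: p q => [|a p IH] [|b q] /=; rewrite ?add0r ?addr0 //.
by rewrite IH polyCD mulrDl addrACA.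
Qed.

Lemma pev_mapmul a q : pev (map (LMul a) q) = (ev cst v a)%:P * pev q.
Proof.
elim: q => [|b q IH] /=; first by rewrite mulr0.
by rewrite IH polyCM mulrDr mulrA.
Qed.

Lemma pev_pmul p q : pev (pmul p q) = pev p * pev q.
Proof.
elim: p => [|a p IH]; first by rewrite /= mul0r.
transitivity (pev (map (LMul a) q) + pev (LC 0 :: pmul p q)); first exact: pev_padd.
rewrite pev_mapmul /= IH rmorph0 polyC0 add0r mulrDl; congr (_ + _).
by rewrite mulrAC.
Qed.

Lemma pev_nseq k : pev (rcons (nseq k (LC 0)) (LC (-1))) = - 'X^k.
Proof.
elim: k => [|k IH] /=; first by rewrite mul0r addr0 rmorphN1 polyCN expr0.
by rewrite IH rmorph0 polyC0 add0r exprSr mulNr.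
Qed.

Lemma pev_PhiInvZ c e y :
  (pev (PhiInvZ c e)).[y] = ev cst (fun a k => v a k - (a == c)%:R * y ^+ k) e.
Proof.
elim: e => [r|a k|e1 IH1 e2 IH2|e1 IH1 e2 IH2].
- by rewrite /= mul0r addr0 hornerC.
- have -> : PhiInvZ c (LP a k) = if a == c then padd [:: LP a k] (rcons (nseq k (LC 0)) (LC (-1))) else [:: LP a k] by [].
  rewrite [ev _ _ _]/=; case: (eqVneq a c) => [_|ne].
    by rewrite pev_padd pev_nseq /= mul0r addr0 hornerD hornerC hornerN hornerXn mul1r.
  by rewrite /= mul0r addr0 hornerC mul0r subr0.
- by rewrite [PhiInvZ _ _]/= pev_padd hornerD IH1 IH2.
- by rewrite [PhiInvZ _ _]/= pev_pmul hornerM IH1 IH2.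
Qed.

Lemma pev_PhiInvF c (L : seq (Lam R s)) y :
  (pev (foldr (fun f acc => padd (PhiInvZ c f) (LC 0 :: acc)) [::] L)).[y]
  = T (fun a k => v a k - (a == c)%:R * y ^+ k) L y.
Proof.
elim: L => [|f L IH]; first by rewrite /= horner0 /T big_ord0.
rewrite [foldr _ _ _]/= pev_padd /= hornerD pev_PhiInvZ T_cons rmorph0 polyC0 add0r hornerMX IH.
by [].
Qed.
End Pev.

Lemma swapo_val N i j (k : 'I_N) : val (swapo i j k) = swapn i j k.
Proof.
rewrite /swapo /swapn.
have -> : (nat_of_ord k == nat_of_ord i) = (k == i) by [].
have -> : (nat_of_ord k == nat_of_ord j) = (k == j) by [].
by case: (eqVneq k i) => [_|ki] //; case: (eqVneq k j).
Qed.

Lemma swapo_inv N i j (k : 'I_N) : swapo i j (swapo i j k) = k.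
Proof.
rewrite /swapo.
case: (eqVneq k i) => [->|ki].
  by case: (eqVneq j i) => [->|ji]; rewrite ?eqxx.
case: (eqVneq k j) => [->|kj]; first by rewrite eqxx.
by rewrite (negPf ki) (negPf kj).
Qed.

Section Main.
Variables (R : comNzRingType) (s : nat).

Lemma ev_Phis N (c : {ffun 'I_N -> 'I_s}) l (e : Lam (mpoly R N) s) v :
  ev id v (Phis c l e) =
  ev id (fun a k => v a k + \sum_(i <- l | c i == a) mvar R N i ^+ k) e.
Proof.
elim: l e v => [|i l IH] e v.
  by apply: ev_ext => // a k; rewrite big_nil addr0.
rewrite /Phis /= -/(Phis c l _) IH ev_Phi; apply: ev_ext => // a k.
rewrite big_cons eq_sym; case: (c i == a); rewrite ?mul1r ?mul0r ?addr0 //.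
by rewrite -addrA [_ + mvar _ _ _ ^+ _]addrC.
Qed.

Lemma evalF_T N (F : LV R s) b (y : mpoly R N) w :
  ev id w (evalF F b y) = T (mconstR R N) w (F b) y.
Proof.
rewrite /evalF ev_lsum // big_map /T.
have -> : iota 0 (size (F b)) = index_iota 0 (size (F b)) by rewrite /index_iota subn0.
rewrite big_mkord; apply: eq_bigr => m _ /=.
rewrite ev_lmap; congr (_ * _); apply: ev_ext => // r /=.
by rewrite mconstRE.
Qed.

Definition Q N (c : {ffun 'I_N -> 'I_s}) (j : 'I_N) (a : 'I_s) (k : nat) : mpoly R N :=
  \sum_(i < N | (c i == a) && (i != j)) mvar R N i ^+ k.

Lemma pibar1E n (F : LV R s) c :
  pibar1 F c = T (mconstR R n.+1) (Q c (@ord0 n)) (F (c (@ord0 n))) (mvar R n.+1 (@ord0 n)).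
Proof.
rewrite /pibar1 vac0E ev_Phis evalF_T; apply: T_ext => a k.
rewrite add0r big_filter_cond big_enum_cond /Q; apply: eq_bigl => i /=.
by rewrite andbC.
Qed.
End Main.
Section Main2.
Variables (R : comNzRingType) (s : nat).

Lemma sigmaE n (F : LV R s) c (j : 'I_n.+1) :
  sigma (@ord0 n) j (pibar1 F) c = T (mconstR R n.+1) (@Q R s _ c j) (F (c j)) (mvar R n.+1 j).
Proof.
rewrite /sigma pibar1E ffunE.
have -> : swapo (@ord0 n) j ord0 = j by rewrite /swapo eqxx.
rewrite (@meval_ext R _ (@mconst R n.+1) (mconstR R n.+1)); last by move=> r; rewrite mconstRE.
rewrite mevalRE.
set phi := mevalR _ _ _.
rewrite /T rmorph_sum; apply: eq_bigr => m _; rewrite rmorphM rmorphXn ev_morph.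
congr (_ * _ ^+ _).
- apply: ev_ext => [r|a k].
    by rewrite /comp mconstRE mevalR_mconst mconstRE.
  rewrite /Q rmorph_sum [RHS](reindex_inj (can_inj (swapo_inv (@ord0 n) j))).
  apply: eq_big => i.
    rewrite ffunE; congr (_ && _).
    have {2}-> : j = swapo (@ord0 n) j ord0 by rewrite /swapo eqxx.
    by rewrite (inj_eq (can_inj (swapo_inv (@ord0 n) j))).
  move=> _; rewrite rmorphXn mevalR_mvar // swapo_val.
  by [].
- by rewrite mevalR_mvar // /swapn eqxx.
Qed.
End Main2.
From Stdlib Require Import FunctionalExtensionality.
Section Main3.
Variables (R : comNzRingType) (s : nat).

Lemma pibarE n (v : Lam R s) c :
  @pibar R s n.+1 v c = ev (mconstR R n.+1)
     (fun a k => \sum_(i < n.+1 | c i == a) mvar R n.+1 i ^+ k) v.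
Proof.
rewrite /pibar vac0E ev_Phis ev_lmap; apply: ev_ext => [r|a k] /=.
  by rewrite mconstRE.
by rewrite add0r big_enum_cond; apply: eq_bigl.
Qed.

Lemma PQ n (c : {ffun 'I_n.+1 -> 'I_s}) (i : 'I_n.+1) b k :
  \sum_(i' < n.+1 | c i' == b) mvar R n.+1 i' ^+ k - (b == c i)%:R * mvar R n.+1 i ^+ k
  = @Q R s _ c i b k.
Proof.
case: (eqVneq b (c i)) => [->|ne].
  by rewrite mul1r (bigD1 i) ?eqxx //= addrAC subrr add0r.
rewrite mul0r subr0 /Q; apply: eq_bigl => i'.
case: (eqVneq i' i) => [->|]; rewrite ?andbT ?andbF //.
by rewrite eq_sym (negPf ne).
Qed.

Lemma SF_E n (F : LV R s) (c : {ffun 'I_n.+1 -> 'I_s}) :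
  ev (mconstR R n.+1) (fun a k => \sum_(i < n.+1 | c i == a) mvar R n.+1 i ^+ k) (SF F)
  = \sum_(i < n.+1) T (mconstR R n.+1) (@Q R s _ c i) (F (c i)) (mvar R n.+1 i).
Proof.
rewrite /SF ev_lsum ?rmorph0 // big_map big_enum /=.
rewrite [RHS](partition_big (fun i => c i) xpredT) //=.
apply: eq_big => // a _.
rewrite ev_lsum ?rmorph0 // big_map.
set G := PhiInvF F a.
have -> : iota 0 (size G) = index_iota 0 (size G) by rewrite /index_iota subn0.
rewrite big_mkord /=.
under eq_bigr do rewrite big_distrl.
rewrite exchange_big /=; apply: eq_bigr => i /eqP cia.
transitivity ((pev (mconstR R n.+1)
   (fun a k => \sum_(i < n.+1 | c i == a) mvar R n.+1 i ^+ k) G).[mvar R n.+1 i]).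
  rewrite pev_horner /T; apply: eq_bigr => m _ /=; by rewrite mulrC.
rewrite /G /PhiInvF pev_PhiInvF cia; apply: T_ext => b k.
by rewrite -cia PQ.
Qed.
End Main3.

Theorem lemma3p2 (R : comNzRingType) (s : nat) (F : LV R s) (n : nat) :
  EN (@pibar1 R s n F) = @pibar R s n.+1 (SF F).
Proof.
apply: functional_extensionality => c.
rewrite pibarE SF_E /EN; apply: eq_bigr => j _.
case: eqP => [->|_]; first by rewrite pibar1E.
by rewrite sigmaE.
Qed.
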